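(* Let $(f_n)_{n\geqslant1}$ be a sequence of nondecreasing functions $f_n:[0,\infty)\to[0,\infty)$. Assume that there is an increasing sequence $(s_k)_{k\geqslant1}\subset[0,\infty)$ with $s_k\to\infty$ such that for each $k$ the sequence $(f_n(s_k))_{n\geqslant1}$ has a limit, denoted $f(s_k)$ (possibly $+\infty$), and let $\ell=\lim_{k\to\infty}f(s_k)$ (which exists since $(f(s_k))_k$ is nondecreasing). Then: (i) for any sequence $t_n\to\infty$, $\liminf_{n\to\infty}f_n(t_n)\geqslant\ell$; (ii) there exists a nondecreasing sequence $(t_n^* )_{n\geqslant1}$ with $t_n^*\to\infty$ such that $f_n(t_n^* )\to\ell$; (iii) if $(t_n^* )_{n\geqslant1}$ is as in (ii), then for any sequence $(t_n)_{n\geqslant1}$ with $0\leqslant t_n\leqslant t_n^*$ and $t_n\to\infty$, one has $f_n(t_n)\to\ell$. *)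

(* Defs.v *)
From HB Require Import structures.
From mathcomp Require Import all_boot all_order all_algebra.
From mathcomp Require Import all_classical all_reals all_analysis.
Set Implicit Arguments. Unset Strict Implicit. Unset Printing Implicit Defensive.
Import Order.TTheory GRing.Theory Num.Theory.
Import numFieldNormedType.Exports.

(* Main.v *)
Require Import Defs.
From HB Require Import structures.
From mathcomp Require Import all_boot all_order all_algebra.
From mathcomp Require Import all_classical all_reals all_analysis.
Import Order.TTheory GRing.Theory Num.Theory.
Import numFieldNormedType.Exports.

Fixpoint kseq (N : nat -> nat) (n : nat) : nat :=
  match n with
  | 0 => 0
  | m.+1 => if N (kseq N m).+1 <= m.+1 then (kseq N m).+1 else kseq N m
  end.

Lemma kseq_S N n : kseq N n <= kseq N n.+1.
Proof. by rewrite /=; case: ifP. Qed.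

Lemma kseq_nd N m n : m <= n -> kseq N m <= kseq N n.
Proof.
apply: (homo_leq (r := leq)) => //; [exact: leq_trans|exact: kseq_S].
Qed.

Lemma kseq_inv N n : kseq N n = 0 \/ N (kseq N n) <= n.
Proof.
elim: n => [|n IH]; first by left.
rewrite /=; case: ifP => [->|_]; first by right.
case: IH => [->|h]; [by left|right; exact: leq_trans h (leqnSn n)].
Qed.

Lemma kseq_oo N K : exists n, K <= kseq N n.
Proof.
elim: K => [|K [n0 Hn0]]; first by exists 0.
have [lt|] := ltnP K (kseq N n0); first by exists n0.
move=> ge; have eK : kseq N n0 = K by apply/eqP; rewrite eqn_leq ge Hn0.
pose n1 := maxn n0 (N K.+1).
have h1 : K <= kseq N n1 by rewrite -eK kseq_nd // leq_maxl.
exists n1.+1; have [lt|ge1] := ltnP K (kseq N n1).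
  exact: leq_trans lt (kseq_S N n1).
have e1 : kseq N n1 = K by apply/eqP; rewrite eqn_leq ge1 h1.
rewrite /= e1 ifT //; apply: leq_trans (leq_maxr n0 _) (leqnSn _).
Qed.

Local Open Scope ring_scope.

Local Open Scope ring_scope.
Local Open Scope classical_set_scope.

Section helpers.
Context {R : realType}.
Local Open Scope ereal_scope.
Implicit Types (u v : (\bar R)^nat).

Lemma einf_mono u v : (\forall n \near \oo, u n <= v n) ->
  limn_einf u <= limn_einf v.
Proof.
move=> [N _ HN]; rewrite !limn_einf_lim.
apply: lee_lim; [exact: is_cvg_einfs|exact: is_cvg_einfs|].
exists N => // n /= Nn; apply: le_ereal_inf_tmp => _ [m /= mn <-].
apply: le_trans (HN m _); last by rewrite /= (leq_trans Nn mn).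
by apply: ereal_inf_lbound; exists m.
Qed.

Lemma esup_mono u v : (\forall n \near \oo, u n <= v n) ->
  limn_esup u <= limn_esup v.
Proof.
move=> [N _ HN]; rewrite !limn_esup_lim.
apply: lee_lim; [exact: is_cvg_esups|exact: is_cvg_esups|].
exists N => // n /= Nn; apply: ge_ereal_sup => _ [m /= mn <-].
apply: le_trans (HN m _) _; first by rewrite /= (leq_trans Nn mn).
by apply: ereal_sup_ubound; exists m.
Qed.

Lemma einf_esup_cvg u l : l <= limn_einf u -> limn_esup u <= l ->
  u @ \oo --> l.
Proof.
move=> h1 h2.
have e1 : limn_einf u = l.
  by apply/eqP; rewrite eq_le h1 (le_trans (limn_einf_sup u) h2).
have e2 : limn_esup u = l.
  by apply/eqP; rewrite eq_le h2 (le_trans h1 (limn_einf_sup u)).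
have c1 : einfs u @ \oo --> l.
  by rewrite -e1 limn_einf_lim; exact: is_cvg_einfs.
have c2 : esups u @ \oo --> l.
  by rewrite -e2 limn_esup_lim; exact: is_cvg_esups.
apply: (squeeze_cvge _ c1 c2).
apply: nearW => n; apply/andP; split.
  by apply: ereal_inf_lbound; exists n => /=.
by apply: ereal_sup_ubound; exists n => /=.
Qed.
Lemma esup_cst (c : \bar R) : limn_esup (fun _ : nat => c) = c.
Proof. exact: (cvg_limn_einf_sup (cvg_cst c)).2. Qed.
End helpers.

Local Open Scope classical_set_scope.

Theorem lemma2p2 (R : realType) (f : nat -> R -> R) (s : nat -> R)
  (fs : nat -> \bar R)
  (f_ge0 : forall n x, 0 <= x -> 0 <= f n x)
  (f_nd : forall n x y, 0 <= x -> x <= y -> f n x <= f n y)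
  (s_ge0 : forall k, 0 <= s k)
  (s_incr : forall k, s k < s k.+1)
  (s_oo : s @ \oo --> +oo)
  (f_sk : forall k, (fun n => (f n (s k))%:E) @ \oo --> fs k) :
  let l := limn fs in
  [/\ (forall t : nat -> R, (forall n, 0 <= t n) -> t @ \oo --> +oo ->
         (l <= limn_einf (fun n => (f n (t n))%:E))%E),
      (exists ts : nat -> R, [/\ (forall n, 0 <= ts n), nondecreasing_seq ts,
         ts @ \oo --> +oo & (fun n => (f n (ts n))%:E) @ \oo --> l]) &
      (forall ts : nat -> R,
         (forall n, 0 <= ts n) -> nondecreasing_seq ts -> ts @ \oo --> +oo ->
         (fun n => (f n (ts n))%:E) @ \oo --> l ->
         forall t : nat -> R, (forall n, 0 <= t n <= ts n) -> t @ \oo --> +oo ->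
         (fun n => (f n (t n))%:E) @ \oo --> l)].
Proof.
move=> l.
have s_nd : forall i j, (i <= j)%N -> s i <= s j.
  apply: (homo_leq (r := fun x y => x <= y)) => //; first exact: le_trans.
  by move=> i; exact: ltW.
have fs_ge0 : forall k, (0 <= fs k)%E.
  move=> k; apply: (lee_cvg_to (cvg_cst 0%E) (f_sk k)).
  by apply: nearW => n; rewrite lee_fin f_ge0.
have fs_nd : nondecreasing_seq fs.
  move=> i j ij; apply: (lee_cvg_to (f_sk i) (f_sk j)).
  by apply: nearW => n; rewrite lee_fin f_nd ?s_nd.
have l_sup : l = ereal_sup (range fs).
  exact: cvg_lim (ereal_nondecreasing_cvgn fs_nd).
have fs_le : forall k, (fs k <= l)%E.
  by move=> k; rewrite l_sup; apply: ereal_sup_ubound; exists k.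
have l_ge0 : (0 <= l)%E by exact: le_trans (fs_ge0 0%N) (fs_le 0%N).
have ev_ge : forall (t : nat -> R), t @ \oo --> +oo ->
    forall A, exists N, forall n, (N <= n)%N -> A <= t n.
  move=> t too A; have [N _ HN] := (@cvgryPge R nat \oo _ t).1 too A.
  by exists N => n Nn; exact: HN.
have partI : forall t : nat -> R, (forall n, 0 <= t n) -> t @ \oo --> +oo ->
         (l <= limn_einf (fun n => (f n (t n))%:E))%E.
  move=> t t0 too; rewrite l_sup; apply: ge_ereal_sup => _ [k _ <-].
  have [<- _] := cvg_limn_einf_sup (f_sk k).
  apply: einf_mono; have [N HN] := ev_ge t too (s k).
  exists N => // n /= Nn; rewrite lee_fin; exact: f_nd (s_ge0 k) (HN n Nn).
split => //; last first.
  move=> ts ts0 tsnd tsoo tsl t t0 too; apply: einf_esup_cvg; first by apply: partI => // n; case/andP: (t0 n).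
  have [_ <-] := cvg_limn_einf_sup tsl.
  apply: esup_mono; apply: nearW => n; have /andP[h1 h2] := t0 n.
  by rewrite lee_fin; apply: f_nd.
have HN : forall k, exists N : nat, forall n, (N <= n)%N ->
    ((f n (s k))%:E <= fs k + ((k.+1%:R)^-1)%:E)%E.
  move=> k; have := fs_ge0 k; have := f_sk k.
  case: (fs k) => [r| |] // fr _.
    move/fine_cvgP: fr => [_ /cvgrPdist_lt /(_ ((k.+1%:R)^-1)) h].
    have [N _ HN] := h (ltac:(by rewrite invr_gt0 ltr0n)).
    exists N => n Nn; have := HN n Nn; rewrite /= distrC => /ltW.
    by rewrite ler_distl -EFinD lee_fin => /andP[].
  by exists 0%N => n _; rewrite leey.
have [N HN'] := choice HN.
pose kn := kseq N.
have ts_oo : (fun n => s (kn n)) @ \oo --> +oo.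
  apply/cvgryPge => A; have [K HK] := ev_ge s s_oo A.
  have [n0 Hn0] := kseq_oo N K.
  exists n0 => // n /= n0n; apply: HK.
  exact: (leq_trans Hn0 (kseq_nd _ _ _ n0n)).
have Nkn : forall n, (N 0%N <= n)%N -> (N (kn n) <= n)%N.
  move=> n Hn; rewrite /kn; case: (kseq_inv N n) => [e0|//]; by rewrite e0.
exists (fun n => s (kn n)); split => //.
- by move=> m n mn; apply: s_nd; apply: kseq_nd.
apply: einf_esup_cvg; first exact: partI.
clear partI l_sup; clearbody l; move: l_ge0 fs_le; case: l => [r| |] // _ fs_le; last by rewrite leey.
apply/lee_addgt0Pr => _ /posnumP[e].
have [K _ HK] := near_infty_natSinv_lt e.
have [n0 Hn0] := kseq_oo N K.
rewrite -EFinD -(esup_cst (r + e%:num)%:E).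
apply: esup_mono; exists (maxn n0 (N 0%N)) => // n /= Hn.
have Kk : (K <= kn n)%N.
  exact: (leq_trans Hn0 (kseq_nd _ _ _ (leq_trans (leq_maxl _ _) Hn))).
apply: le_trans (HN' (kn n) n (Nkn n (leq_trans (leq_maxr _ _) Hn))) _.
rewrite EFinD; apply: leeD; first exact: fs_le.
by rewrite lee_fin; apply/ltW/HK.
Qed.
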